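(* Let $a, b, n$ be positive integers with $b>1$, $n>1$ and $\gcd(r_b(n),a)=1$. Then the genus of $S_a(b,n)$ is \[\operatorname{g}(S_a(b,n)) = \frac{(n-1)\, b^n + (r_b(n) - 1)\, a}{2} = \frac{(n-1)\,b^n + a\sum_{j=1}^{n-1} b^j}{2}.\]
   Context: For $\ell \ge 1$, $r_b(\ell) = \sum_{j=0}^{\ell-1} b^j$, and $r_b(0)=0$. For $i \ge 1$, $a_i := r_b(n) + a\, r_b(i-1)$; $S_a(b,n)$ is the numerical semigroup generated by $\{a_i : i\ge 1\}$. The genus $\operatorname{g}(S)$ of a numerical semigroup $S$ is the cardinality of $\mathbb{N}\setminus S$. *)

(* Defs.v *)
From mathcomp Require Import all_boot.
Set Implicit Arguments. Unset Strict Implicit. Unset Printing Implicit Defensive.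

Definition rb (b l : nat) : nat := \sum_(j < l) b ^ j.

Definition gen (a b n i : nat) : nat := rb b n + a * rb b i.-1.

Definition inS (a b n x : nat) : Prop :=
  exists s : seq nat, all (fun i => 0 < i) s /\ x = sumn [seq gen a b n i | i <- s].

(* "The genus of S is g": the complement N \ S is finite with exactly g
   elements, witnessed by a duplicate-free list enumerating it. *)
Definition has_genus (a b n g : nat) : Prop :=
  exists l : seq nat, uniq l /\ (forall x, x \in l <-> ~ inS a b n x) /\ size l = g.

(* Main.v *)
Require Import Defs.
From mathcomp Require Import all_boot.
From mathcomp Require Import zify.

Lemma rb0 b : rb b 0 = 0. Proof. by rewrite /rb big_ord0. Qed.
Lemma rbS b l : rb b l.+1 = rb b l + b ^ l. Proof. by rewrite /rb big_ord_recr. Qed.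
Lemma rbS' b l : rb b l.+1 = b * rb b l + 1.
Proof. elim: l => [|l IH]; first by rewrite rbS rb0 muln0.
rewrite rbS {1}IH rbS mulnDr expnS; lia. Qed.
Lemma rb_add b i n : rb b (i + n) = rb b i + b ^ i * rb b n.
Proof. elim: n => [|n IH]; first by rewrite addn0 rb0 muln0 addn0.
rewrite addnS !rbS IH expnD; lia. Qed.
Lemma rb_mono b j n : 0 < b -> j < n -> rb b j < rb b n.
Proof. move=> b0; elim: n => [//|n IH]; rewrite ltnS leq_eqVlt => /orP[/eqP->|/IH h].
  by rewrite rbS -[X in X < _]addn0 ltn_add2l expn_gt0 b0.
rewrite rbS; apply: (leq_trans h); exact: leq_addr. Qed.

Fixpoint mm (b n N : nat) : nat :=
  match n with 0 => N | n'.+1 => N %/ rb b n' + mm b n' (N %% rb b n') end.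

Lemma mS b n q r : r < rb b n -> mm b n.+1 (q * rb b n + r) = q + mm b n r.
Proof. move=> h /=. have p : 0 < rb b n by apply: leq_ltn_trans h.
by rewrite divnMDl // modnMDl divn_small // modn_small // addn0. Qed.

Lemma m0 b n : mm b n 0 = 0.
Proof. by elim: n => //= n IH; rewrite div0n mod0n IH. Qed.

Lemma mD b n : 0 < n -> mm b n (rb b n - 1) <= b.
Proof. case: n => // n _. rewrite rbS' addnK.
case: (posnP (rb b n)) => [->|p]; first by rewrite muln0 m0.
by rewrite -[b * _]addn0 mS // m0 addn0. Qed.

Lemma mC b n N : 0 < b -> 0 < N -> N < rb b n -> mm b n N.-1 <= mm b n N + (b - 1).
Proof. move=> b0; elim: n N => [|n IH] N N0; first by rewrite rb0.
case: n IH => [|n] IH. by rewrite rbS' rb0 muln0; lia.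
move=> NR. set R := rb b n.+1. have R0 : 0 < R by rewrite /R rbS'; lia.
have [q [r [eN rR]]] : exists q r, N = q * R + r /\ r < R.
  by exists (N %/ R), (N %% R); rewrite -divn_eq ltn_mod.
subst N. case: (posnP r) => r0.
  subst r. have q0 : 0 < q by case: (posnP q) N0 => [->|]; lia.
  have -> : (q * R + 0).-1 = q.-1 * R + (R - 1) by rewrite -{1}(prednK q0) mulSn; lia.
  rewrite !mS ?m0; [|lia|lia].
  have := mD b (n.+1) isT; rewrite -/R; lia.
have -> : (q * R + r).-1 = q * R + r.-1 by lia.
rewrite !mS //; last by lia. have := IH r r0 rR; lia. Qed.

Lemma lt_mulR q b R r : q < b -> r < R -> q * R + r < b * R.
Proof. move=> qb rR; have h : q.+1 * R <= b * R by rewrite leq_mul.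
move: h; rewrite mulSn; lia. Qed.

Lemma mAB b n : 0 < b -> forall N j, N < rb b n -> 0 < j < n ->
  (N + rb b j < rb b n -> mm b n (N + rb b j) <= mm b n N + 1) /\
  (rb b n <= N + rb b j -> mm b n (N + rb b j - rb b n) <= mm b n N).
Proof.
move=> b0; elim: n => [|n IH] N j; first by move=> _ /andP[? ?]; lia.
case: n IH => [|n] IH; first by move=> _ /andP[? ?]; lia.
set R := rb b n.+1 => NR /andP[j0 jn].
have R' : rb b n.+2 = b * R + 1 by rewrite rbS'.
rewrite R' in NR *. have R0 : 0 < R by rewrite /R rbS'; lia.
have [q [r [eN rR]]] : exists q r, N = q * R + r /\ r < R.
  by exists (N %/ R), (N %% R); rewrite -divn_eq ltn_mod.
subst N.
have qb : q <= b.
  rewrite leqNgt; apply/negP => h; have : b.+1 * R <= q * R by rewrite leq_mul.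
  rewrite mulSn; lia.
rewrite mS //.
move: jn; rewrite ltnS leq_eqVlt => /orP[/eqP ej|jn].
- subst j. rewrite -/R.
  have [qb1|[qb1|qb1]] : q.+1 < b \/ q.+1 = b \/ b < q.+1 by lia.
  + have h : q.+1 * R + r < b * R by apply: lt_mulR.
    split => [_|]; last by move: h; rewrite mulSn; lia.
    have -> : q * R + r + R = q.+1 * R + r by rewrite mulSn; lia.
    rewrite mS //; lia.
  + case: (posnP r) => r0.
    * subst r. split => [_|].
        have -> : q * R + 0 + R = q.+1 * R + 0 by rewrite mulSn; lia.
        rewrite mS //; lia.
      rewrite -qb1 mulSn; lia.
    * split => [|_]; first by rewrite -qb1 mulSn; lia.
      have -> : q * R + r + R - (b * R + 1) = 0 * R + r.-1 by rewrite -qb1 mulSn; lia.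
      rewrite mS; last by lia.
      have := mC b n.+1 r b0 r0 rR; lia.
  + have eq : q = b by lia. subst q.
    have r0 : r = 0 by lia. subst r.
    split => [|_]; first by lia.
    have -> : b * R + 0 + R - (b * R + 1) = 0 * R + (R - 1) by lia.
    rewrite mS; last by lia.
    have := mD b n.+1 isT; rewrite -/R m0; lia.
- have [HA HB] := IH r j rR (introT andP (conj j0 jn)).
  rewrite -/R in HA HB.
  have jR : rb b j < R by apply: rb_mono.
  have j1 : 0 < rb b j by have := rb_mono b 0 j b0 j0; rewrite rb0.
  have [qeb|qlb] : q = b \/ q < b by lia.
  + subst q. have r0 : r = 0 by lia. subst r.
    split => [|_]; first by lia.
    have -> : b * R + 0 + rb b j - (b * R + 1) = 0 * R + (rb b j).-1 by lia.
    rewrite mS; last by lia.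
    have h1 := mC b n.+1 (rb b j) b0 j1 jR.
    have h2 := HA; rewrite add0n m0 in h2. have := h2 jR. rewrite m0; lia.
  + have [rs|rs] : r + rb b j < R \/ R <= r + rb b j by lia.
    * have h := lt_mulR _ _ _ _ qlb rs. split => [_|]; last by lia.
      rewrite -addnA mS //; have := HA rs; lia.
    * have hb := HB rs.
      have [c1|c2] : q.+1 < b \/ r + rb b j - R = 0 \/ q.+1 = b /\ 0 < r + rb b j - R by lia.
      - have h := lt_mulR _ _ _ _ c1 (ltac:(lia) : r + rb b j - R < R).
        have -> : q * R + r + rb b j = q.+1 * R + (r + rb b j - R) by rewrite mulSn; lia.
        move: h; rewrite mS; last by lia. move=> h. split => [_|]; last by lia.
        lia.
      - case: c2 => [c2|[c2 c3]].
        + have -> : q * R + r + rb b j = q.+1 * R + 0 by rewrite mulSn; lia.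
          rewrite mS // m0. split => [_|]; last by have := leq_mul qlb (leqnn R); lia.
          lia.
        + have e : b * R = q * R + R by rewrite -c2 mulSn addnC.
          split => [|_]; first by lia.
          have -> : q * R + r + rb b j - (b * R + 1) = 0 * R + (r + rb b j - R).-1
            by lia.
          rewrite mS; last by lia.
          have := mC b n.+1 _ b0 c3 (ltac:(lia) : r + rb b j - R < R); lia.
Qed.

Lemma step b n : 0 < b -> 0 < n -> forall j N, N < rb b n ->
  mm b n ((rb b j + N) %% rb b n) <= mm b n N + 1 + (rb b j + N) %/ rb b n.
Proof.
move=> b0 n0 j; elim/ltn_ind: j => j IH N NR.
set R := rb b n. have R0 : 0 < R by apply: leq_ltn_trans NR.
case: (ltnP j n) => jn.
  case: (posnP j) => j0.
    subst j. rewrite rb0 add0n modn_small; last exact NR.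
    move: (N %/ R) => d; lia.
  have [HA HB] := mAB b n b0 N j NR (introT andP (conj j0 jn)). rewrite -/R in HA HB.
  case: (ltnP (rb b j + N) R) => h.
    rewrite modn_small // divn_small // addnC; have := HA; rewrite addnC => /(_ h). lia.
  have jR : rb b j < R by apply: rb_mono.
  have -> : rb b j + N = 1 * R + (N + rb b j - R) by lia.
  rewrite modnMDl divnMDl // modn_small; last by lia.
  have := HB; rewrite addnC => /(_ h); rewrite addnC; move: (_ %/ R) => d; lia.
have -> : rb b j + N = b ^ (j - n) * R + (rb b (j - n) + N).
  by rewrite /R -{1}(subnK jn) rb_add; lia.
rewrite modnMDl divnMDl //. have := IH (j - n) (ltac:(lia)) N NR. rewrite -/R.
have := expn_gt0 b (j - n). move: (_ %/ R) (_ %% R) => d e; lia.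
Qed.

Lemma pot b n L : 0 < b -> 0 < n ->
  mm b n ((sumn (map (rb b) L)) %% rb b n) <= size L + (sumn (map (rb b) L)) %/ rb b n.
Proof.
move=> b0 n0. have R0 : 0 < rb b n by have := rb_mono b 0 n b0 n0; rewrite rb0.
elim: L => [|j L IH] /=; first by rewrite mod0n m0.
move: IH; set M := sumn _ => IH.
have eM := divn_eq M (rb b n).
have -> : rb b j + M = M %/ rb b n * rb b n + (rb b j + M %% rb b n) by lia.
rewrite modnMDl divnMDl //.
have := step b n b0 n0 j (M %% rb b n) (ltn_pmod _ R0).
move: ((rb b j + M %% rb b n) %/ rb b n) (M %/ rb b n) IH => f d IH; lia.
Qed.

Fixpoint rep (b n N : nat) : seq nat :=
  match n with 0 => [::] | n'.+1 => nseq (N %/ rb b n') n' ++ rep b n' (N %% rb b n') end.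

Lemma rep_ok b n N : 0 < b -> N < rb b n ->
  sumn (map (rb b) (rep b n N)) = N /\ size (rep b n N) = mm b n N.
Proof.
move=> b0; elim: n N => [|n IH] N; first by rewrite rb0.
case: n IH => [|n] IH.
  by rewrite rbS' rb0 muln0 add0n ltnS leqn0 => /eqP -> /=; rewrite div0n mod0n.
move=> _ /=. have R0 : 0 < rb b n.+1 by have := rb_mono b 0 n.+1 b0 isT; rewrite rb0.
have [h1 h2] := IH (N %% rb b n.+1) (ltn_pmod _ R0).
rewrite map_cat sumn_cat map_nseq sumn_nseq size_cat size_nseq h1 h2.
split => //. rewrite [RHS](divn_eq N (rb b n.+1)). lia.
Qed.

Lemma modinv R a v N : (a * v) %% R = 1 -> N %% R = ((a * N %% R) * v) %% R.
Proof. move=> h. by rewrite modnMml -[N in LHS]muln1 -h modnMmr mulnA (mulnC N a). Qed.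

Lemma uniqN R a v N1 N2 : (a * v) %% R = 1 -> N1 < R -> N2 < R ->
  a * N1 = a * N2 %[mod R] -> N1 = N2.
Proof.
move=> h n1 n2 e. rewrite -(modn_small n1) -(modn_small n2) (modinv _ _ _ N1 h) (modinv _ _ _ N2 h).
by rewrite e.
Qed.


Lemma sum_gen2 R a b L : sumn (map (fun j => R + a * rb b j) L) =
   size L * R + a * sumn (map (rb b) L).
Proof. elim: L => [|j L IH] /=; first by rewrite muln0. rewrite IH mulnDr; lia. Qed.

Lemma ax R a v x : (a * v) %% R = 1 -> a * ((x * v) %% R) = x %[mod R].
Proof. move=> h. by rewrite modnMmr mulnCA -modnMmr h muln1. Qed.

Definition wN a b n N := mm b n N * rb b n + a * N.

Lemma charS a b n v x : 0 < a -> 0 < b -> 0 < n -> (a * v) %% rb b n = 1 ->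
  inS a b n x <-> wN a b n ((x * v) %% rb b n) <= x.
Proof.
move=> a0 b0 n0 h. set R := rb b n.
have R0 : 0 < R by have := rb_mono b 0 n b0 n0; rewrite rb0.
split.
  case=> s [_ ->]. rewrite (_ : map (gen a b n) s = map (fun j => R + a * rb b j) (map predn s));
    last by rewrite -map_comp.
  rewrite sum_gen2. set L := map predn s. set M := sumn (map (rb b) L).
  have hp := pot b n L b0 n0. rewrite -/R -/M in hp.
  have -> : (size L * R + a * M) * v %% R = M %% R.
    apply: (uniqN _ _ _ _ _ h); rewrite ?ltn_pmod //.
    rewrite ax // -modnMmr modn_mod modnMmr modnMDl //.
  rewrite /wN -/R.
  have eM := divn_eq M R.
  have h1 := leq_mul hp (leqnn R).
  have h2 : M %/ R * R <= a * (M %/ R * R) by rewrite leq_pmull.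
  move: h1 h2 eM. move: (M %/ R) (M %% R) (mm b n (M %% R)) => d e m h1 h2 eM.
  rewrite eM. nia.
move=> hw. set N := (x * v) %% R. move: hw; rewrite -/N => hw.
have NR : N < R by rewrite ltn_pmod.
have [e1 e2] := rep_ok b n N b0 NR.
have ex : x = wN a b n N %[mod R].
  by rewrite /wN -/R modnMDl -(ax R a v x h).
have : R %| x - wN a b n N by rewrite -eqn_mod_dvd // ex.
case/dvdnP => c hc.
exists (map S (rep b n N) ++ nseq c 1). split.
  rewrite all_cat all_nseq /= orbT andbT; by apply/allP => i /mapP[j _ ->].
rewrite map_cat sumn_cat -map_comp map_nseq sumn_nseq.
rewrite (_ : map (gen a b n \o S) (rep b n N) = map (fun j => R + a * rb b j) (rep b n N)) //.
rewrite sum_gen2 e1 e2 /gen /= rb0 muln0 addn0 -/R.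
move: hc hw; rewrite /wN -/R; lia.
Qed.

Lemma sum_block (F : nat -> nat) q R :
  \sum_(0 <= N < q * R) F N = \sum_(i < q) \sum_(0 <= r < R) F (i * R + r).
Proof.
elim: q => [|q IH]; first by rewrite mul0n big_ord0 big_geq.
rewrite big_ord_recr /= -IH mulSn addnC (@big_cat_nat _ _ _ (q * R)) ?leq_addr //=.
congr (_ + _). rewrite -{1}[q * R]add0n big_addn addKn.
by apply: eq_bigr => i _; rewrite addnC.
Qed.

Lemma sum_id b : 2 * \sum_(i < b) i = b * b.-1.
Proof. elim: b => [|b IH]; first by rewrite big_ord0.
rewrite big_ord_recr /= mulnDr IH; case: b {IH} => //= b; lia. Qed.

Lemma sum_mm_nat b n : 0 < b ->
  2 * \sum_(0 <= N < rb b n.+1) mm b n.+1 N = n * b ^ n.+1 + b * rb b n.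
Proof.
move=> b0; elim: n => [|n IH].
  by rewrite rbS' rb0 muln0 add0n big_nat1 /= div0n mod0n.
set R := rb b n.+1 in IH *.
have R0 : 0 < R by rewrite /R rbS'; lia.
rewrite rbS' -/R addn1 big_nat_recr // sum_block.
have -> : mm b n.+2 (b * R) = b by rewrite -[b * R]addn0 mS // m0 addn0.
rewrite (eq_bigr (fun i : 'I_b => R * i + \sum_(0 <= r < R) mm b n.+1 r)); last first.
  move=> i _. rewrite (eq_big_nat _ _ (F2 := fun r => i + mm b n.+1 r)); last first.
    by move=> r /andP[_ hr]; rewrite mS.
  by rewrite big_split /= sum_nat_const_nat subn0 mulnC.
rewrite big_split /= -big_distrr /= sum_nat_const card_ord.
have T := sum_id b.
have E : R + b ^ n.+1 = b * R + 1 by rewrite -rbS rbS'.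
have Rr : R = b * rb b n + 1 by rewrite /R rbS'.
rewrite [b ^ n.+2]expnS.
move: IH T E. 
move: (\sum_(0 <= i < R) mm b n.+1 i) (\sum_(i < b) i) (b ^ n.+1) => S T B IH hT E.
have F2 : 2 * (b * S) = n * (b * B) + b * (b * rb b n).
  by rewrite mulnCA IH mulnDr mulnCA.
have F3 : b * (b * rb b n) + b = b * R by rewrite Rr mulnDr muln1.
have F1 : 2 * (R * T) + b = b * B.
  rewrite mulnCA hT. clearbody R. case: b b0 {F2 F3 Rr IH} E hT => // c _ E hT /=.
  have EB : B = c * R + 1 by move: E; rewrite mulSn; lia.
  rewrite EB. lia.
lia.
Qed.

Lemma pw a R v i : (a * v) %% R = 1 -> 0 < i < R ->
  (a * i) %/ R + (a * (R - i)) %/ R = a - 1.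
Proof.
move=> h /andP[i0 iR]. have R0 : 0 < R by lia.
have nz : forall k, 0 < k < R -> 0 < (a * k) %% R.
  move=> k /andP[k0 kR]. rewrite lt0n; apply/negP => /eqP e.
  have := modinv _ _ _ k h. rewrite e mul0n mod0n modn_small //; lia.
have r1 := nz i (ltac:(lia)). have r2 := nz (R - i) (ltac:(lia)).
have s1 := ltn_pmod (a * i) R0. have s2 := ltn_pmod (a * (R - i)) R0.
have e1 := divn_eq (a * i) R. have e2 := divn_eq (a * (R - i)) R.
have eS : a * i + a * (R - i) = a * R by rewrite -mulnDr subnKC // ltnW.
move: r1 r2 s1 s2 e1 e2 eS.
move: (a * i) (a * (R - i)) ((a * i) %/ R) ((a * (R - i)) %/ R) ((a * i) %% R) ((a * (R - i)) %% R)
  => x y q1 q2 t1 t2 r1 r2 s1 s2 e1 e2 eS.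
have lt : q1 + q2 < a.
  rewrite ltnNge; apply/negP => hh. have := leq_mul hh (leqnn R). lia.
have ge : a <= (q1 + q2).+1.
  rewrite leqNgt; apply/negP => hh. have := leq_mul hh (leqnn R). rewrite !mulSn. lia.
lia.
Qed.

Lemma sum_div a R v : 1 < R -> (a * v) %% R = 1 ->
  2 * \sum_(N < R) (a * N) %/ R = (a - 1) * (R - 1).
Proof.
move=> R1 h. have R0 : 0 < R by lia.
rewrite -(big_mkord xpredT (fun N => (a * N) %/ R)) big_ltn // muln0 div0n add0n.
rewrite mul2n -addnn {2}big_nat_rev -big_split /=.
rewrite (eq_big_nat _ _ (F2 := fun _ => a - 1)); last first.
  move=> i hi. have -> : 1 + R - i.+1 = R - i by lia. exact: (pw _ _ v).
by rewrite sum_nat_const_nat mulnC.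
Qed.

Lemma sum_mm b n : 0 < b ->
  2 * \sum_(N < rb b n.+1) mm b n.+1 N = n * b ^ n.+1 + b * rb b n.
Proof. move=> b0; rewrite -(sum_mm_nat b n b0). by rewrite big_mkord. Qed.

Definition gaps a b n := [seq (wN a b n N %% rb b n) + rb b n * t |
   N <- iota 0 (rb b n), t <- iota 0 (wN a b n N %/ rb b n)].

Lemma wN_mod a b n N : wN a b n N = a * N %[mod rb b n].
Proof. by rewrite /wN modnMDl. Qed.

Lemma gaps_mem a b n v x : 0 < a -> 0 < b -> 0 < n -> (a * v) %% rb b n = 1 ->
  x \in gaps a b n <-> ~ inS a b n x.
Proof.
move=> a0 b0 n0 h. set R := rb b n.
have R0 : 0 < R by have := rb_mono b 0 n b0 n0; rewrite rb0.
rewrite (charS _ _ _ _ _ a0 b0 n0 h) -/R.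
split.
  case/allpairsPdep => N [t [NI tI ->]].
  rewrite mem_iota in NI; rewrite mem_iota in tI. rewrite add0n in NI tI.
  have -> : (wN a b n N %% R + R * t) * v %% R = N.
    apply: (uniqN _ _ _ _ _ h); rewrite ?ltn_pmod //.
    rewrite ax // addnC (mulnC R t) modnMDl modn_mod. exact: wN_mod.
  have e := divn_eq (wN a b n N) R.
  have := leq_mul (leqnn R) tI. move: e. rewrite -/R.
  move: (wN a b n N %/ R) (wN a b n N %% R) (wN a b n N) => d e w; nia.
move=> /negP; rewrite -ltnNge => hx.
apply/allpairsPdep. exists ((x * v) %% R), (x %/ R).
have NR : (x * v) %% R < R by rewrite ltn_pmod.
have ex : wN a b n ((x * v) %% R) %% R = x %% R.
  by rewrite wN_mod ax.
split.
- by rewrite mem_iota add0n.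
- rewrite mem_iota add0n /=.
  have e1 := divn_eq x R. have e2 := divn_eq (wN a b n ((x * v) %% R)) R.
  rewrite -(ltn_pmul2r R0). move: hx e1 e2. rewrite ex.
  move: (x %/ R * R) (wN a b n _ %/ R * R) (x %% R) => d d' e. lia.
- rewrite ex mulnC addnC -divn_eq //.
Qed.

Lemma gaps_uniq a b n v : 0 < b -> 0 < n -> (a * v) %% rb b n = 1 -> uniq (gaps a b n).
Proof.
move=> b0 n0 h. set R := rb b n.
have R0 : 0 < R by have := rb_mono b 0 n b0 n0; rewrite rb0.
apply: allpairs_uniq_dep; first exact: iota_uniq.
  by move=> N _; exact: iota_uniq.
move=> [N1 t1] [N2 t2] /allpairsPdep[N1' [t1' [h1 h1' e1]]] /allpairsPdep[N2' [t2' [h2 h2' e2]]] /=.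
case: e1 => eN1 et1; case: e2 => eN2 et2. subst.
rewrite mem_iota add0n in h1; rewrite mem_iota add0n in h2.
move=> e.
have eN : N1' = N2'.
  apply: (uniqN _ _ _ _ _ h h1 h2). rewrite -!wN_mod -/R.
  have := congr1 (modn^~ R) e. rewrite !(addnC (_ %% R)) !(mulnC R) !modnMDl !modn_mod //.
subst. move: e => /eqP; rewrite eqn_add2l eqn_mul2l => /orP[/eqP R00|/eqP->//].
by move: R0; rewrite /R R00.
Qed.

Lemma size_gaps a b n : 0 < b -> 0 < n ->
  size (gaps a b n) = \sum_(N < rb b n) (mm b n N + (a * N) %/ rb b n).
Proof.
move=> b0 n0. have R0 : 0 < rb b n by have := rb_mono b 0 n b0 n0; rewrite rb0.
rewrite /gaps size_allpairs_dep sumnE big_map -(big_mkord xpredT (fun N => mm b n N + (a * N) %/ rb b n)) /index_iota subn0.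
apply: eq_bigr => N _. by rewrite size_iota /wN divnMDl.
Qed.

Theorem corollary26 (a b n : nat) :
  0 < a -> 1 < b -> 1 < n -> coprime (rb b n) a ->
  exists g : nat, has_genus a b n g /\
    g * 2 = (n - 1) * b ^ n + (rb b n - 1) * a /\
    g * 2 = (n - 1) * b ^ n + a * \sum_(1 <= j < n) b ^ j.
Proof.
move=> a0 b1 n1 cop.
have b0 : 0 < b by lia. have n0 : 0 < n by lia.
case: n n1 n0 cop => [//|n'] n1 n0 cop.
have Re : rb b n'.+1 = b * rb b n' + 1 by rewrite rbS'.
have rb1 : 0 < rb b n' by have := rb_mono b 0 n' b0 (ltac:(lia)); rewrite rb0.
set R := rb b n'.+1 in Re cop *.
have R1 : 1 < R by rewrite Re; have := leq_mul b1 rb1; lia.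
have [v hv] : exists v, (a * v) %% R = 1.
  case: (egcdnP R a0) => km kn e _. exists km.
  rewrite mulnC e gcdnC (eqP cop) modnMDl modn_small //.
exists (\sum_(N < R) (mm b n'.+1 N + (a * N) %/ R)).
have hsum : \sum_(1 <= j < n'.+1) b ^ j = R - 1.
  rewrite /R /rb -(big_mkord xpredT (fun j => b ^ j)) [in RHS]big_ltn // expn0; lia.
split.
  exists (gaps a b n'.+1). split; first exact: (gaps_uniq _ _ _ _ b0 n0 hv).
  split; first by move=> x; exact: (gaps_mem _ _ _ _ x a0 b0 n0 hv).
  exact: size_gaps.
rewrite big_split /= hsum.
have h1 := sum_mm b n' b0. have h2 := sum_div _ _ _ R1 hv. rewrite -/R in h1.
rewrite subSS subn0 -[R in (R - 1) * a]/R.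
have hR : R - 1 = b * rb b n' by lia.
rewrite hR in h2 *.
move: h1 h2. move: (\sum_(i < R) mm b n'.+1 i) (\sum_(i < R) a * i %/ R) => s1 s2 h1 h2.
have : (a - 1) * (b * rb b n') + b * rb b n' = a * (b * rb b n').
  by rewrite -{2}[b * rb b n']mul1n -mulnDl subnK.
split; lia.
Qed.
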